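(* Let $R$ be a local ring and $s\in R$ a central element. Then $A\in M_2(R;s)$ is strongly clean if and only if one of the following holds: (1) $A\in U\big(M_2(R;s)\big)$; (2) $I_2-A\in U\big(M_2(R;s)\big)$; (3) $s\in U(R)$ and $A$ is similar to $\left[\begin{smallmatrix} w&0\\ 0&v\end{smallmatrix}\right]$ for some $v\in 1+J(R)$, $w\in J(R)$; (4) $s\in J(R)$ and $A$ is similar to $\left[\begin{smallmatrix} v&0\\ 0&w\end{smallmatrix}\right]$ or to $\left[\begin{smallmatrix} w&0\\ 0&v\end{smallmatrix}\right]$ for some $v\in 1+J(R)$, $w\in J(R)$.
   Context: All rings are associative with identity. A ring $R$ is local if $R/J(R)$ is a division ring, where $J(R)$ is the Jacobson radical; $U(T)$ is the group of units of a ring $T$. For a ring $R$ and a central element $s\in R$, $M_2(R;s)$ denotes the ring whose elements are the $2\times 2$ arrays $\left[\begin{smallmatrix} a&b\\ c&d\end{smallmatrix}\right]$ with $a,b,c,d\in R$, with componentwise addition and multiplication $\left[\begin{smallmatrix} a&b\\ c&d\end{smallmatrix}\right]\left[\begin{smallmatrix} a'&b'\\ c'&d'\end{smallmatrix}\right]=\left[\begin{smallmatrix} aa'+s^2bc'&ab'+bd'\\ ca'+dc'&s^2cb'+dd'\end{smallmatrix}\right]$, with identity $I_2$. Two elements $A,B\in M_2(R;s)$ are similar if $B=P^{-1}AP$ for some unit $P$ of $M_2(R;s)$. An element $a$ of a ring $T$ is strongly clean if there is an idempotent $e\in T$ with $ae=ea$ and $a-e\in U(T)$. *)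

(* Defs.v *)
From mathcomp Require Import all_boot all_algebra.
Set Implicit Arguments. Unset Strict Implicit. Unset Printing Implicit Defensive.
Import GRing.Theory.
Local Open Scope ring_scope.

Definition in_jacobson (R : unitRingType) (x : R) : Prop :=
  forall r : R, (1 - r * x) \is a GRing.unit.

(* R is local: R/J(R) is a division ring, i.e. R/J(R) is nonzero
   (1 \notin J(R)) and every class x + J(R) with x \notin J(R) has a
   two-sided inverse y + J(R) in R/J(R). *)
Definition local_ring (R : unitRingType) : Prop :=
  ~ in_jacobson (1 : R) /\
  forall x : R, ~ in_jacobson x ->
    exists y : R, in_jacobson (1 - x * y) /\ in_jacobson (1 - y * x).

Definition central (R : ringType) (s : R) : Prop := forall x : R, s * x = x * s.

Record M2 (R : Type) := mkM2 { m11 : R; m12 : R; m21 : R; m22 : R }.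

Section M2ops.
Variable (R : ringType) (s : R).

Definition M2mul (A B : M2 R) : M2 R :=
  mkM2 (m11 A * m11 B + s ^+ 2 * m12 A * m21 B)
       (m11 A * m12 B + m12 A * m22 B)
       (m21 A * m11 B + m22 A * m21 B)
       (s ^+ 2 * m21 A * m12 B + m22 A * m22 B).

Definition M2sub (A B : M2 R) : M2 R :=
  mkM2 (m11 A - m11 B) (m12 A - m12 B) (m21 A - m21 B) (m22 A - m22 B).

Definition M2one : M2 R := mkM2 1 0 0 1.

Definition M2diag (a d : R) : M2 R := mkM2 a 0 0 d.

Definition M2unit (P : M2 R) : Prop :=
  exists Q : M2 R, M2mul P Q = M2one /\ M2mul Q P = M2one.

Definition M2similar (A B : M2 R) : Prop :=
  exists P Q : M2 R, M2mul P Q = M2one /\ M2mul Q P = M2one /\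
    B = M2mul (M2mul Q A) P.

Definition M2_strongly_clean (A : M2 R) : Prop :=
  exists E : M2 R, M2mul E E = E /\ M2mul A E = M2mul E A /\ M2unit (M2sub A E).

End M2ops.

(* Main.v *)
Require Import Defs.
From mathcomp Require Import all_boot all_algebra.
From Stdlib Require Import Classical.
Set Implicit Arguments. Unset Strict Implicit.
Import GRing.Theory.
Local Open Scope ring_scope.

Section Loc.
Variable R : unitRingType.
Local Notation jac := (@in_jacobson R).

Lemma jac_opp (x : R) : jac x -> jac (- x).
Proof. by move=> h r; rewrite mulrN -mulNr. Qed.

Lemma jac_mull (x y : R) : jac y -> jac (x * y).
Proof. by move=> h r; rewrite mulrA. Qed.

Lemma unit_addJ (d j : R) : d \is a GRing.unit -> jac j -> (d + j) \is a GRing.unit.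
Proof.
move=> hd hj.
have -> : d + j = d * (1 - (- d^-1) * j) by rewrite mulNr opprK mulrDr mulr1 mulrA (mulrV hd) mul1r.
by rewrite unitrMr.
Qed.

Lemma unit_subJ (d j : R) : d \is a GRing.unit -> jac j -> (d - j) \is a GRing.unit.
Proof. by move=> hd hj; apply: unit_addJ => //; apply: jac_opp. Qed.

Lemma jac_unit1 (j : R) : jac j -> (1 - j) \is a GRing.unit.
Proof. by move=> h; have := h 1; rewrite mul1r. Qed.

Lemma jac_unit1' (j : R) : jac j -> (1 + j) \is a GRing.unit.
Proof. by move=> h; have := h (-1); rewrite mulN1r opprK. Qed.

Lemma dich (hl : local_ring R) (x : R) : x \is a GRing.unit \/ jac x.
Proof.
case: (classic (jac x)) => hj; [by right|left].
have [y [h1 h2]] := hl.2 x hj.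
have u1 : x * y \is a GRing.unit by have := jac_unit1 h1; rewrite opprB addrC subrK.
have u2 : y * x \is a GRing.unit by have := jac_unit1 h2; rewrite opprB addrC subrK.
apply/unitrP; exists (y * (x * y)^-1); split; last by rewrite mulrA mulrV.
have e : (y * x)^-1 * y = y * (x * y)^-1.
  by rewrite -[LHS]mulr1 -(mulrV u1) !mulrA -[_ * y * x]mulrA mulVr // mul1r.
by rewrite -e -mulrA mulVr.
Qed.
End Loc.

Ltac nsimp := rewrite ?(mulr0, mul0r, addr0, add0r, subr0, sub0r, oppr0, opprK, mulrN, mulNr, mulrA, mul1r, mulr1, addNr, addrN).
Ltac nsimpu h := rewrite ?(mulrK h, mulrVK h, mulrV h, mulVr h).

Section M2L.
Variable R : unitRingType.
Variable s : R.
Hypothesis hs : central s.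

Lemma ht (x : R) : x * s ^+ 2 = s ^+ 2 * x.
Proof. by rewrite expr2 mulrA -hs -mulrA -hs mulrA. Qed.

Local Notation "X ** Y" := (M2mul s X Y) (at level 40, left associativity).

Lemma M2mulA X Y Z : X ** Y ** Z = X ** (Y ** Z).
Proof.
case: X => x1 x2 x3 x4; case: Y => y1 y2 y3 y4; case: Z => z1 z2 z3 z4.
rewrite /M2mul /=; have := ht; move: (s ^+ 2) => t htt.
congr mkM2; rewrite !(mulrDl, mulrDr, mulrA) ?htt.
all: by rewrite addrACA.
Qed.

Lemma M2mul1l X : M2one R ** X = X.
Proof. by case: X => *; rewrite /M2mul /=; congr mkM2; rewrite !(mul1r, mul0r, mulr0, addr0, add0r). Qed.
Lemma M2mul1r X : X ** M2one R = X.
Proof. by case: X => *; rewrite /M2mul /=; congr mkM2; rewrite !(mulr1, mul0r, mulr0, addr0, add0r). Qed.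

Lemma M2mulBl X Y Z : M2sub X Y ** Z = M2sub (X ** Z) (Y ** Z).
Proof.
case: X => *; case: Y => *; case: Z => *; rewrite /M2mul /M2sub /=; congr mkM2;
by rewrite ?(mulrBl, mulrBr) opprD addrACA.
Qed.
Lemma M2mulBr X Y Z : Z ** M2sub X Y = M2sub (Z ** X) (Z ** Y).
Proof.
case: X => *; case: Y => *; case: Z => *; rewrite /M2mul /M2sub /=; congr mkM2;
by rewrite ?(mulrBl, mulrBr) opprD addrACA.
Qed.

Lemma M2unitM X Y : M2unit s X -> M2unit s Y -> M2unit s (X ** Y).
Proof.
move=> [X' [h1 h2]] [Y' [h3 h4]]; exists (Y' ** X'); split.
  by rewrite M2mulA -(M2mulA Y) h3 M2mul1l h1.
by rewrite M2mulA -(M2mulA X') h2 M2mul1l h4.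
Qed.

Lemma M2unit_conj P Q X : P ** Q = M2one R -> Q ** P = M2one R -> M2unit s X ->
  M2unit s (P ** X ** Q).
Proof.
move=> h1 h2 hX; apply: M2unitM; first apply: M2unitM => //.
  by exists Q. by exists P.
Qed.

Lemma M2canc P Q X : P ** Q = M2one R -> P ** (Q ** X) = X.
Proof. by move=> h; rewrite -M2mulA h M2mul1l. Qed.

Lemma transport A E P Q : P ** Q = M2one R -> Q ** P = M2one R ->
  A ** E = E ** A -> M2unit s (M2sub A E) ->
  (Q ** A ** P) ** (Q ** E ** P) = (Q ** E ** P) ** (Q ** A ** P) /\
  M2unit s (M2sub (Q ** A ** P) (Q ** E ** P)).
Proof.
move=> h1 h2 hAE hU; split.
  by rewrite !M2mulA !(M2canc _ h1) -(M2mulA A) hAE M2mulA.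
by rewrite -M2mulBl -M2mulBr; apply: M2unit_conj.
Qed.

Lemma upper_unit a b d : a \is a GRing.unit -> d \is a GRing.unit -> M2unit s (mkM2 a b 0 d).
Proof.
move=> ha hd; exists (mkM2 a^-1 (-(a^-1*b*d^-1)) 0 d^-1); rewrite /M2mul /=; split; congr mkM2;
by do 3 (nsimp; nsimpu ha; nsimpu hd).
Qed.

Lemma lower_unit a c d : a \is a GRing.unit -> d \is a GRing.unit -> M2unit s (mkM2 a 0 c d).
Proof.
move=> ha hd; exists (mkM2 a^-1 0 (-(d^-1*c*a^-1)) d^-1); rewrite /M2mul /=; split; congr mkM2;
by do 3 (nsimp; nsimpu ha; nsimpu hd).
Qed.

Lemma schurA a b c d : a \is a GRing.unit -> (d - s^+2 * c * a^-1 * b) \is a GRing.unit ->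
  M2unit s (mkM2 a b c d).
Proof.
move=> ha hd.
have -> : mkM2 a b c d = mkM2 1 0 (c * a^-1) 1 ** mkM2 a b 0 (d - s^+2 * c * a^-1 * b).
  rewrite /M2mul /=; congr mkM2; nsimp; nsimpu ha; nsimp => //.
  by rewrite addrC subrK.
by apply: M2unitM; [apply: lower_unit; rewrite ?unitr1|apply: upper_unit].
Qed.

Lemma schurD a b c d : d \is a GRing.unit -> (a - s^+2 * b * d^-1 * c) \is a GRing.unit ->
  M2unit s (mkM2 a b c d).
Proof.
move=> hd ha.
have -> : mkM2 a b c d = mkM2 1 (b * d^-1) 0 1 ** mkM2 (a - s^+2 * b * d^-1 * c) 0 c d.
  rewrite /M2mul /=; congr mkM2; nsimp; nsimpu hd; nsimp => //.
  by rewrite subrK.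
by apply: M2unitM; [apply: upper_unit; rewrite ?unitr1|apply: lower_unit].
Qed.

Section Idem.
Hypothesis hl : local_ring R.
Variables e1 e2 e3 e4 : R.
Local Notation t := (s ^+ 2).
Hypothesis I1 : e1 * e1 + t * e2 * e3 = e1.
Hypothesis I2 : e1 * e2 + e2 * e4 = e2.
Hypothesis I3 : e3 * e1 + e4 * e3 = e3.
Hypothesis I4 : t * e3 * e2 + e4 * e4 = e4.
Local Notation E := (mkM2 e1 e2 e3 e4).

Lemma I1' : t * e2 * e3 = e1 - e1 * e1.
Proof. by apply: (addrI (e1 * e1)); rewrite I1 addrC subrK. Qed.
Lemma I2' : e2 * e4 = e2 - e1 * e2.
Proof. by apply: (addrI (e1 * e2)); rewrite I2 addrC subrK. Qed.
Lemma I3' : e3 * e1 = e3 - e4 * e3.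
Proof. by apply: (addrI (e4 * e3)); rewrite addrC I3 addrC subrK. Qed.
Lemma I4' : t * e3 * e2 = e4 - e4 * e4.
Proof. by apply: (addrI (e4 * e4)); rewrite addrC I4 addrC subrK. Qed.

Lemma u1E : mkM2 e1 e2 (-e3) (1 - e4) ** E = M2diag 1 0 ** mkM2 e1 e2 (-e3) (1 - e4).
Proof.
rewrite /M2mul /M2diag /=; congr mkM2; nsimp => //.
  by rewrite mulrBl mul1r I3' addNr.
by rewrite mulrBl mul1r I4' addNr.
Qed.

Lemma u2E : mkM2 (1 - e1) (- e2) e3 e4 ** E = M2diag 0 1 ** mkM2 (1 - e1) (- e2) e3 e4.
Proof.
rewrite /M2mul /M2diag /=; congr mkM2; nsimp => //.
  by rewrite mulrBl mul1r I1' subrr.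
by rewrite mulrBl mul1r I2' subrr.
Qed.

Lemma u0E : mkM2 (1 - e1) (- e2) (- e3) (1 - e4) ** E = M2diag 0 0 ** mkM2 (1 - e1) (- e2) (- e3) (1 - e4).
Proof.
rewrite /M2mul /M2diag /=; congr mkM2; nsimp => //.
- by rewrite mulrBl mul1r I1' subrr.
- by rewrite mulrBl mul1r I2' subrr.
- by rewrite mulrBl mul1r I3' addNr.
by rewrite mulrBl mul1r I4' addNr.
Qed.

Lemma uIE : E ** E = M2one R ** E.
Proof. by rewrite M2mul1l /M2mul /=; rewrite I1 I2 I3 I4. Qed.

Lemma idem_class : exists u u' x y, u ** u' = M2one R /\ u' ** u = M2one R /\
  u ** E = M2diag x y ** u /\
  [\/ x = 0 /\ y = 0, x = 1 /\ y = 1, x = 1 /\ y = 0 | x = 0 /\ y = 1].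
Proof.
suff [u [x [y [hu [hE hxy]]]]] : exists u x y, M2unit s u /\ u ** E = M2diag x y ** u /\
  [\/ x = 0 /\ y = 0, x = 1 /\ y = 1, x = 1 /\ y = 0 | x = 0 /\ y = 1].
  by case: hu => u' [h1 h2]; exists u, u', x, y.
have dc := dich hl.
have htt := ht.
case: (dc e2) => [he2|je2].
  case: (dc e1) => [he1|je1].
    exists (mkM2 e1 e2 (-e3) (1 - e4)), 1, 0; split; last by split; [apply: u1E | constructor 3].
    apply: schurA => //.
    have F1 : t * e3 = e2^-1 * (e1 - e1 * e1).
      by rewrite -I1' -(htt e2) -[e2 * t * e3]mulrA (mulKr he2).
    have F2 : e4 = 1 - e2^-1 * e1 * e2.
      by rewrite -[e4](mulKr he2) I2' mulrBr (mulVr he2) mulrA.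
    have G : (e1 - e1 * e1) / e1 = 1 - e1 by rewrite mulrBl (mulrV he1) (mulrK he1).
    have -> : 1 - e4 - t * - e3 / e1 * e2 = 1.
      rewrite mulrN !mulNr opprK F1 -[e2^-1 * _ / e1]mulrA G mulrBr mulr1 mulrBl (mulVr he2).
      by rewrite -F2 subrK.
    by rewrite unitr1.
  exists (mkM2 (1 - e1) (- e2) e3 e4), 0, 1; split; last by split; [apply: u2E | constructor 4].
  have ha := jac_unit1 je1.
  apply: schurA => //.
  have F1 : t * e3 = e2^-1 * (e1 - e1 * e1).
    by rewrite -I1' -(htt e2) -[e2 * t * e3]mulrA (mulKr he2).
  have F2 : e4 = 1 - e2^-1 * e1 * e2.
    by rewrite -[e4](mulKr he2) I2' mulrBr (mulVr he2) mulrA.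
  have -> : e4 - t * e3 / (1 - e1) * - e2 = 1.
    have G : (e1 - e1 * e1) / (1 - e1) = e1 by rewrite -{1}[e1]mulr1 -mulrBr (mulrK ha).
    rewrite mulrN opprK F1 -[e2^-1 * _ / (1 - e1)]mulrA G.
    by rewrite {1}F2 subrK.
  by rewrite unitr1.
case: (dc e3) => [he3|je3].
  have F3 : t * e2 = e3^-1 * (e4 - e4 * e4).
    by rewrite -I4' -(htt e3) -[e3 * t * e2]mulrA (mulKr he3).
  have F4 : e1 = 1 - e3^-1 * e4 * e3.
    by rewrite -[e1](mulKr he3) I3' mulrBr (mulVr he3) mulrA.
  case: (dc e4) => [he4|je4].
    exists (mkM2 (1 - e1) (- e2) e3 e4), 0, 1; split; last by split; [apply: u2E | constructor 4].
    apply: schurD => //.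
    have G : (e4 - e4 * e4) / e4 = 1 - e4.
      by rewrite mulrBl (mulrV he4) (mulrK he4).
    have -> : 1 - e1 - t * - e2 / e4 * e3 = 1.
      rewrite mulrN !mulNr opprK F3 -[e3^-1 * _ / e4]mulrA G mulrBr mulr1 mulrBl (mulVr he3).
      by rewrite -F4 subrK.
    by rewrite unitr1.
  exists (mkM2 e1 e2 (- e3) (1 - e4)), 1, 0; split; last by split; [apply: u1E | constructor 3].
  have hd := jac_unit1 je4.
  apply: schurD => //.
  have -> : e1 - t * e2 / (1 - e4) * - e3 = 1.
    have G : (e4 - e4 * e4) / (1 - e4) = e4 by rewrite -{1}[e4]mulr1 -mulrBr (mulrK hd).
    rewrite mulrN opprK F3 -[e3^-1 * _ / (1 - e4)]mulrA G.
    by rewrite {1}F4 subrK.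
  by rewrite unitr1.
case: (dc e1) => [he1|je1]; case: (dc e4) => [he4|je4].
- exists E, 1, 1; split; last by split; [apply: uIE | constructor 2].
  apply: schurA => //; apply: unit_subJ => //; exact: jac_mull.
- exists (mkM2 e1 e2 (-e3) (1 - e4)), 1, 0; split; last by split; [apply: u1E | constructor 3].
  apply: schurA => //; apply: unit_subJ; [exact: jac_unit1 | exact: jac_mull].
- exists (mkM2 (1 - e1) (- e2) e3 e4), 0, 1; split; last by split; [apply: u2E | constructor 4].
  apply: schurA; first exact: jac_unit1.
  apply: unit_subJ => //; apply: jac_mull; exact: jac_opp.
exists (mkM2 (1 - e1) (- e2) (- e3) (1 - e4)), 0, 0; split; last by split; [apply: u0E | constructor 1].
apply: schurA; first exact: jac_unit1.
apply: unit_subJ; first exact: jac_unit1.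
apply: jac_mull; exact: jac_opp.
Qed.
End Idem.

Definition concl (A : M2 R) := [\/ M2unit s A, M2unit s (M2sub (M2one R) A),
       s \is a GRing.unit /\
         (exists v w : R, in_jacobson (v - 1) /\ in_jacobson w /\
            M2similar s A (M2diag w v))
     | in_jacobson s /\
         (exists v w : R, in_jacobson (v - 1) /\ in_jacobson w /\
            (M2similar s A (M2diag v w) \/ M2similar s A (M2diag w v)))].

Lemma M2sim_trans P Q A B : P ** Q = M2one R -> Q ** P = M2one R ->
  M2similar s (Q ** A ** P) B -> M2similar s A B.
Proof.
move=> h1 h2 [P2 [Q2 [h3 [h4 ->]]]]; exists (P ** P2), (Q2 ** Q); split; [|split].
- by rewrite !M2mulA (M2canc _ h3) h1.
- by rewrite !M2mulA (M2canc _ h2) h4.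
- by rewrite !M2mulA.
Qed.

Lemma M2sim_refl A : M2similar s A A.
Proof. by exists (M2one R), (M2one R); rewrite !M2mul1l M2mul1r. Qed.

Definition M2neg (X : M2 R) := mkM2 (- m11 X) (- m12 X) (- m21 X) (- m22 X).

Lemma M2negM X Y : M2neg X ** M2neg Y = X ** Y.
Proof. by case: X => *; case: Y => *; rewrite /M2mul /M2neg /=; congr mkM2; nsimp. Qed.

Lemma M2unit_subC X Y : M2unit s (M2sub X Y) -> M2unit s (M2sub Y X).
Proof.
have e : M2sub Y X = M2neg (M2sub X Y).
  by case: X => *; case: Y => *; rewrite /M2neg /M2sub /=; congr mkM2; rewrite opprB.
move=> [W [h1 h2]]; exists (M2neg W); by rewrite e !M2negM.
Qed.

Lemma concl_transport P Q A : P ** Q = M2one R -> Q ** P = M2one R ->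
  concl (Q ** A ** P) -> concl A.
Proof.
move=> h1 h2 hA.
have eA : P ** (Q ** A ** P) ** Q = A by rewrite !M2mulA (M2canc _ h1) h1 M2mul1r.
case: hA => [hu|hu|[hs1 [v [w [hv [hw hsim]]]]]|[hs1 [v [w [hv [hw hsim]]]]]].
- by constructor 1; rewrite -eA; apply: M2unit_conj.
- constructor 2.
  have <- : P ** M2sub (M2one R) (Q ** A ** P) ** Q = M2sub (M2one R) A.
    by rewrite M2mulBr M2mulBl eA M2mul1r h1.
  exact: M2unit_conj.
- by constructor 3; split => //; exists v, w; do 2 split => //; apply: (M2sim_trans h1 h2).
- constructor 4; split => //; exists v, w; do 2 split => //.
  by case: hsim => h; [left|right]; apply: (M2sim_trans h1 h2).
Qed.

Lemma diag_unit_inv p q : M2unit s (mkM2 p 0 0 q) -> p \is a GRing.unit /\ q \is a GRing.unit.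
Proof.
move=> [[q1 q2 q3 q4] [h1 h2]]; move: h1 h2; rewrite /M2mul /= => -[h11 _ _ h14] [h21 _ _ h24].
move: h11 h14 h21 h24; nsimp => h11 h14 h21 h24.
by split; apply/unitrP; [exists q1|exists q4].
Qed.

Lemma swap_sim a d : s \is a GRing.unit -> M2similar s (mkM2 a 0 0 d) (M2diag d a).
Proof.
move=> hu; have ht2 : s ^+ 2 \is a GRing.unit by rewrite unitrX.
exists (mkM2 0 1 1 0), (mkM2 0 (s^+2)^-1 (s^+2)^-1 0); rewrite /M2mul /M2diag /=.
by split; [|split]; congr mkM2; nsimp; nsimpu ht2; nsimp.
Qed.

Lemma diag_case (hl : local_ring R) a b c d x y :
  [\/ x = 0 /\ y = 0, x = 1 /\ y = 1, x = 1 /\ y = 0 | x = 0 /\ y = 1] ->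
  mkM2 a b c d ** M2diag x y = M2diag x y ** mkM2 a b c d ->
  M2unit s (M2sub (mkM2 a b c d) (M2diag x y)) -> concl (mkM2 a b c d).
Proof.
have dc := dich hl.
case=> -[-> ->] hc hu.
- constructor 1; move: hu; rewrite /M2sub /M2diag /=; by rewrite !subr0.
- by constructor 2; apply: M2unit_subC.
- move: hc; rewrite /M2mul /M2diag /= => -[_ hb hc _]; move: hb hc; nsimp => hb hc; subst b c.
  move: hu; rewrite /M2sub /M2diag /= !subr0 => hu.
  case/diag_unit_inv: hu => ha1 hd.
  case: (dc a) => [ha|ja]; first by constructor 1; apply: upper_unit.
  case: (dc (d - 1)) => [hd1|jd1].
    constructor 2; rewrite /M2sub /M2one /= !subr0; apply: upper_unit; first exact: jac_unit1.
    by rewrite -opprB unitrN.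
  case: (dc s) => [hs1|js].
    by constructor 3; split => //; exists d, a; do 2 split => //; apply: M2sim_refl.
  by constructor 4; split => //; exists d, a; do 2 split => //; right; apply: M2sim_refl.
- move: hc; rewrite /M2mul /M2diag /= => -[_ hb hc _]; move: hb hc; nsimp => hb hc; subst b c.
  move: hu; rewrite /M2sub /M2diag /= !subr0 => hu.
  case/diag_unit_inv: hu => ha hd1.
  case: (dc d) => [hd|jd]; first by constructor 1; apply: upper_unit.
  case: (dc (a - 1)) => [ha1|ja1].
    constructor 2; rewrite /M2sub /M2one /= !subr0; apply: upper_unit; last exact: jac_unit1.
    by rewrite -opprB unitrN.
  case: (dc s) => [hs1|js].
    by constructor 3; split => //; exists a, d; do 2 split => //; apply: swap_sim.
  by constructor 4; split => //; exists a, d; do 2 split => //; left; apply: M2sim_refl.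
Qed.

Lemma forward (hl : local_ring R) A : M2_strongly_clean s A -> concl A.
Proof.
case=> -[e1 e2 e3 e4] [hEE [hAE hU]].
move: (hEE); rewrite /M2mul /= => -[I1 I2 I3 I4].
have [u [u' [x [y [h1 [h2 [hE hxy]]]]]]] := idem_class hl I1 I2 I3 I4.
have hD : u ** mkM2 e1 e2 e3 e4 ** u' = M2diag x y by rewrite hE M2mulA h1 M2mul1r.
have [hc hu] := transport h2 h1 hAE hU.
apply: (concl_transport h2 h1).
move: hc hu; rewrite hD; case: (u ** A ** u') => a b c d.
exact: diag_case.
Qed.


Lemma back_diag P Q A D : P ** Q = M2one R -> Q ** P = M2one R ->
  D ** D = D -> (Q ** A ** P) ** D = D ** (Q ** A ** P) ->
  M2unit s (M2sub (Q ** A ** P) D) -> M2_strongly_clean s A.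
Proof.
move=> h1 h2 hDD hc hu.
have [hc' hu'] := transport h2 h1 hc hu.
have eA : P ** (Q ** A ** P) ** Q = A by rewrite !M2mulA (M2canc _ h1) h1 M2mul1r.
rewrite eA in hc' hu'.
exists (P ** D ** Q); split => //.
by rewrite !M2mulA (M2canc _ h2) -(M2mulA D D) hDD.
Qed.

Lemma unit_v (v : R) : in_jacobson (v - 1) -> v \is a GRing.unit.
Proof. by move=> /jac_unit1'; rewrite addrC subrK. Qed.
Lemma unit_w1 (w : R) : in_jacobson w -> (w - 1) \is a GRing.unit.
Proof. by move=> /jac_unit1; rewrite -opprB unitrN. Qed.

Lemma back_case A v w : in_jacobson (v - 1) -> in_jacobson w ->
  (M2similar s A (M2diag w v) \/ M2similar s A (M2diag v w)) -> M2_strongly_clean s A.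
Proof.
move=> hv hw [] [P [Q [h1 [h2 hB]]]].
  apply: (@back_diag P Q A (M2diag 1 0)) => //; rewrite -?hB /M2mul /M2sub /M2diag /=.
  - by congr mkM2; nsimp.
  - by congr mkM2; nsimp.
  by rewrite !subr0; apply: upper_unit; [apply: unit_w1 | apply: unit_v].
apply: (@back_diag P Q A (M2diag 0 1)) => //; rewrite -?hB /M2mul /M2sub /M2diag /=.
- by congr mkM2; nsimp.
- by congr mkM2; nsimp.
by rewrite !subr0; apply: upper_unit; [apply: unit_v | apply: unit_w1].
Qed.

Lemma backward A : concl A -> M2_strongly_clean s A.
Proof.
case=> [hu|hu|[_ [v [w [hv [hw hsim]]]]]|[_ [v [w [hv [hw hsim]]]]]].
- exists (M2diag 0 0); split; [|split].
  + by rewrite /M2mul /M2diag /=; congr mkM2; nsimp.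
  + by case: A hu => *; rewrite /M2mul /M2diag /=; congr mkM2; nsimp.
  + by case: A hu => *; rewrite /M2sub /M2diag /= !subr0.
- exists (M2one R); split; [|split].
  + exact: M2mul1l.
  + by rewrite M2mul1l M2mul1r.
  + exact: M2unit_subC.
- by apply: (back_case hv hw); left.
- by apply: (back_case hv hw); case: hsim; [right|left].
Qed.

End M2L.

Theorem lemma2p11 (R : unitRingType) (s : R) (A : M2 R) :
  local_ring R -> central s ->
  (M2_strongly_clean s A <->
   [\/ M2unit s A,
       M2unit s (M2sub (M2one R) A),
       s \is a GRing.unit /\
         (exists v w : R, in_jacobson (v - 1) /\ in_jacobson w /\
            M2similar s A (M2diag w v))
     | in_jacobson s /\
         (exists v w : R, in_jacobson (v - 1) /\ in_jacobson w /\
            (M2similar s A (M2diag v w) \/ M2similar s A (M2diag w v)))]).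
Proof.
move=> hl hs; split; [exact: (forward hs hl) | exact: (backward hs)].
Qed.
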